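(* Let $n$ be a positive integer and $x\in\Gamma_n$. Then \[ \xi_n\bigl(\sigma_{\mathrm{RF}}(x)\bigr)=n-\tfrac12+\tfrac12\,\#_{\mathrm{dl}}(x)+\tfrac12\,W_{\mathrm{tot}}(G_x). \]
   Context: Let $[n]=\{1,\dots,n\}$. $\Gamma_n$ is the set of words $x=(x_1,\dots,x_{2n})\in[n]^{2n}$ in which every symbol of $[n]$ occurs exactly twice. Colours are formal symbols $r,b$. $[\,\cdot\,]$ is the Iverson bracket. For $f\in\{r,b\}^{2n}$, $\xi_n(f)=\sum_{i=1}^{2n-1}[f_i\neq f_{i+1}]$. The red-first colouring $\sigma_{\mathrm{RF}}(x)$ has $i$-th entry $r$ if $x_i\notin\{x_1,\dots,x_{i-1}\}$ and $b$ otherwise. For $i\in[2n-1]$, $\eta(x,i)=[x_{i+1}\in\{x_1,\dots,x_i\}]\oplus[x_i\in\{x_1,\dots,x_{i-1}\}]$. For $e\subseteq[n]$, $\theta_x(e)=-\sum_{i=1}^{2n-1}(-1)^{\eta(x,i)}\delta_{e,\{x_i,x_{i+1}\}}$. The BPSP graph $G_x=(V_x,E_x,W_x)$ has $V_x=[n]$, $E_x=\{\{x_i,x_{i+1}\}: i\in[2n-1],\ x_i\neq x_{i+1},\ \theta_x(\{x_i,x_{i+1}\})\neq0\}$, $W_x=\theta_x|_{E_x}$; $W_{\mathrm{tot}}(G_x)=\sum_{e\in E_x}W_x(e)$. $\#_{\mathrm{dl}}(x)=|\{i\in[2n-1]:x_i=x_{i+1}\}|$. *)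

(* Defs.v *)
From HB Require Import structures.
From mathcomp Require Import all_boot all_order all_algebra.
Set Implicit Arguments. Unset Strict Implicit. Unset Printing Implicit Defensive.
Import Order.TTheory GRing.Theory Num.Theory.

(* Words are sequences of naturals; positions are 0-based in the seq
   (position i of the paper = index i-1), symbols are the naturals 1..n. *)

Definition Gamma (n : nat) (x : seq nat) : bool :=
  [&& size x == 2 * n,
      all (fun v => 0 < v <= n) x &
      all (fun k => count_mem k x == 2) (iota 1 n)].

Inductive colour := r | b.
Definition colour_eqb (c d : colour) : bool :=
  match c, d with r, r | b, b => true | _, _ => false end.
Lemma colour_eqP : Equality.axiom colour_eqb.
Proof. by case; case; constructor. Qed.
HB.instance Definition _ := hasDecEq.Build colour colour_eqP.

Definition xi (n : nat) (f : seq colour) : nat :=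
  \sum_(0 <= i < 2 * n - 1) (nth r f i != nth r f i.+1).

Definition sigma_RF (x : seq nat) : seq colour :=
  [seq (if nth 0 x i \in take i x then b else r) | i <- iota 0 (size x)].

(* eta(x,i) (0-based j = i-1) *)
Definition eta (x : seq nat) (j : nat) : bool :=
  (nth 0 x j.+1 \in take j.+1 x) (+) (nth 0 x j \in take j x).

Definition upair_eq (e f : nat * nat) : bool :=
  ((e.1 == f.1) && (e.2 == f.2)) || ((e.1 == f.2) && (e.2 == f.1)).

Definition theta (n : nat) (x : seq nat) (e : nat * nat) : int :=
  - \sum_(0 <= j < 2 * n - 1)
      ((-1) ^+ eta x j *
       (if upair_eq e (nth 0 x j, nth 0 x j.+1) then 1 else 0)).

Definition norm_pair (a c : nat) : nat * nat := (minn a c, maxn a c).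

Definition Ex (n : nat) (x : seq nat) : seq (nat * nat) :=
  undup [seq norm_pair (nth 0 x j) (nth 0 x j.+1) |
          j <- iota 0 (2 * n - 1) &
          (nth 0 x j != nth 0 x j.+1) &&
          (theta n x (nth 0 x j, nth 0 x j.+1) != 0)].

Definition Wtot (n : nat) (x : seq nat) : int :=
  \sum_(e <- Ex n x) theta n x e.

Definition ndl (n : nat) (x : seq nat) : nat :=
  \sum_(0 <= j < 2 * n - 1) (nth 0 x j == nth 0 x j.+1).

(* Main.v *)
Require Import Defs.
From mathcomp Require Import all_boot all_order all_algebra.
From mathcomp Require Import zify ring lra.
Import Order.TTheory GRing.Theory Num.Theory.
Local Open Scope ring_scope.

Lemma upair_norm (a c : nat) q : upair_eq (norm_pair a c) q = upair_eq (a, c) q.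
Proof.
case: q => q1 q2; rewrite /upair_eq /norm_pair /minn /maxn.
by case: (ltnP a c) => h //=; case: (a == q1); case: (a == q2); case: (c == q1); case: (c == q2).
Qed.

Lemma upair_lt (e : nat * nat) q : (e.1 < e.2)%N ->
  upair_eq e q = (e == norm_pair q.1 q.2).
Proof.
case: e => e1 e2; case: q => q1 q2 /= h.
rewrite /upair_eq /norm_pair /= xpair_eqE.
apply/idP/idP.
  case/orP => /andP [/eqP h1 /eqP h2]; apply/andP; split; apply/eqP; lia.
case/andP => /eqP h1 /eqP h2; apply/orP.
case: (leqP q1 q2) => hq.
  by left; apply/andP; split; apply/eqP; lia.
by right; apply/andP; split; apply/eqP; lia.
Qed.

Lemma Wtot_eq n x :
  Wtot n x = - \sum_(0 <= j < 2 * n - 1)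
     (if nth 0 x j != nth 0 x j.+1 then (-1) ^+ eta x j else 0).
Proof.
set I := index_iota 0 (2 * n - 1).
set P := fun j => nth 0%N x j != nth 0%N x j.+1.
set f := fun j => norm_pair (nth 0%N x j) (nth 0%N x j.+1).
set U := undup [seq f j | j <- I & P j].
have UE : Ex n x = [seq e <- U | theta n x e != 0].
  rewrite /Ex /U filter_undup filter_map -filter_predI.
  congr undup; congr map; rewrite /I /index_iota subn0; apply: eq_filter => j /=.
  rewrite andbC; congr (_ && _).
  by rewrite /f /theta; congr (_ != _); congr (- _); apply: eq_bigr => i _;
    rewrite upair_norm.
have Ult : forall e, e \in U -> (e.1 < e.2)%N.
  move=> e; rewrite /U mem_undup => /mapP [j]; rewrite mem_filter => /andP [hP _] ->.
  rewrite /f /norm_pair /=; move: hP; rewrite /P => /eqP; lia.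
have -> : Wtot n x = \sum_(e <- U) theta n x e.
  rewrite /Wtot UE big_filter big_mkcond; apply: eq_bigr => e _.
  by case: eqP.
rewrite /theta sumrN; congr (- _).
rewrite exchange_big /=; rewrite big_seq [RHS]big_seq; apply: eq_bigr => j hj.
rewrite -mulr_sumr.
have -> : \sum_(e <- U) (if upair_eq e (nth 0%N x j, nth 0%N x j.+1) then 1 else 0 : int)
   = \sum_(e <- U) (if e == f j then 1 else 0 : int).
  by rewrite big_seq [RHS]big_seq; apply: eq_bigr => e he; rewrite upair_lt ?Ult.
rewrite -big_mkcond big_const_seq.
have -> : count (fun e => e == f j) U = (f j \in U).
  by rewrite -count_uniq_mem ?undup_uniq.
case: ifP => hP.
  have -> : f j \in U.
    by rewrite /U mem_undup; apply: map_f; rewrite mem_filter /P hP hj.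
  by rewrite /= addr0 mulr1.
have -> : f j \in U = false.
  apply/negP => /Ult; rewrite /f /norm_pair /=; move/negbFE: hP => /eqP e; by rewrite [nth _ x j]e minnn maxnn ltnn.
by rewrite /= mulr0.
Qed.
Lemma eta_double n x j : Gamma n x -> (j.+1 < 2 * n)%N ->
  nth 0%N x j = nth 0%N x j.+1 -> eta x j.
Proof.
move=> /and3P [/eqP Hsz /allP Hall /allP Hcnt] hj e.
rewrite /eta (take_nth 0%N) ?Hsz; last lia.
rewrite mem_rcons inE e eqxx /=.
set v := nth 0%N x j.+1.
have hv : (v \in iota 1 n).
  have := Hall v (mem_nth 0%N (_ : (j.+1 < size x)%N)).
  rewrite mem_iota Hsz => h; have := h hj; lia.
have Hc := Hcnt v hv.
rewrite -(cat_take_drop j x) count_cat (drop_nth 0%N) ?Hsz in Hc; last lia.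
rewrite (drop_nth 0%N) ?size_drop ?Hsz in Hc; last lia.
rewrite e -/v /= eqxx in Hc.
apply/negP => hin; move: Hc.
have : (0 < count_mem v (take j x))%N by rewrite -has_count has_pred1.
move=> h1 /eqP; move: h1; rewrite /nat_of_bool; set k := count _ (take j x); set k2 := count _ (drop _ _); lia.
Qed.

Lemma xi_eta n x : size x = (2 * n)%N ->
  xi n (sigma_RF x) = (\sum_(0 <= j < 2 * n - 1) eta x j)%N.
Proof.
move=> Hsz; rewrite /xi; apply: eq_big_nat => j /andP [_ hj].
rewrite /sigma_RF (nth_map 0%N) ?size_iota; last lia.
rewrite (nth_map 0%N) ?size_iota; last lia.
rewrite !nth_iota; try lia.
rewrite !add0n /eta.
by case: (_ \in take j x); case: (_ \in take j.+1 x).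
Qed.
Theorem corollary1 (n : nat) (x : seq nat) :
  (0 < n)%N -> Gamma n x ->
  ((xi n (sigma_RF x))%:R : rat)
    = n%:R - 1 / 2 + (ndl n x)%:R / 2 + (Wtot n x)%:~R / 2.
Proof.
move=> n0 G.
have Hsz : size x = (2 * n)%N by case/and3P: G => /eqP.
rewrite xi_eta // Wtot_eq /ndl.
have hm : ((2 * n - 1)%N%:R : rat) = \sum_(0 <= j < 2 * n - 1) 1.
  by rewrite sumr_const_nat subn0.
have key : (\sum_(0 <= j < 2 * n - 1) eta x j)%N%:R * 2 =
   ((2 * n - 1)%N%:R : rat) + (\sum_(0 <= j < 2 * n - 1) (nth 0%N x j == nth 0%N x j.+1))%N%:R
   + (- \sum_(0 <= j < 2 * n - 1)
     (if nth 0%N x j != nth 0%N x j.+1 then (-1) ^+ eta x j else 0) : int)%:~R.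
  rewrite hm !natr_sum rmorphN rmorph_sum mulr_suml -big_split -sumrB /=.
  apply: eq_big_nat => j /andP [_ hj].
  case: (boolP (nth 0%N x j == nth 0%N x j.+1)) => [/eqP e|ne].
    rewrite (@eta_double n x j G) //; last lia.
  rewrite /=.
  by case: (eta x j) => /=; rewrite ?expr0 ?expr1 ?rmorphN ?rmorph1; lra.
rewrite natrB in key; last lia.
rewrite natrM in key.
lra.
Qed.
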